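(* Let $\Sigma=\{1,\dots,q\}^{\mathbb N}$ with shift $\sigma$ and $\psi:\Sigma\to\mathbb R$ continuous. If $\lim_{n\to\infty}\frac1n\|\xi_n\|_\infty=0$, then every conformal measure for $\psi$ is a weak Gibbs measure for $\psi$, and $\psi$ is of weak bounded variation.
   Context: $\mathcal L_\psi\phi(\underline x)=\sum_{\underline y\in\sigma^{-1}\underline x}e^{\psi(\underline y)}\phi(\underline y)$; a conformal measure is a finite positive measure $\mu$ with $\mathcal L_\psi^*\mu=r(\mathcal L_\psi)\mu$, where $r$ is the spectral radius and $(\mathcal L_\psi^*\mu)(\phi)=\int\mathcal L_\psi\phi\,d\mu$. Cylinders $[a_0\dots a_{n-1}]$, $\mathcal C_n$ the set of cylinders of length $n$, $\psi^n=\sum_{i<n}\psi\circ\sigma^i$, $\xi_n(\underline x)=\sup_{\underline y\in[x_0\dots x_{n-1}]}\sum_{i=0}^{n-1}|\psi(\sigma^i\underline x)-\psi(\sigma^i\underline y)|$. $\mu$ is a weak Gibbs measure for $\psi$ if there are a constant $P$ and positive numbers $K_n$ with $\lim_n\frac{\log K_n}{n}=0$ such that for all $n$, $\underline x$ and $\underline y\in[x_0\dots x_{n-1}]$: $K_n^{-1}\le\mu([x_0\dots x_{n-1}])e^{-\psi^n(\underline y)+nP}\le K_n$. $\psi$ is of weak bounded variation if there are positive $K_n$ with $\lim_n\frac{\log K_n}n=0$ and $\sup_{C\in\mathcal C_n}\sup_{\underline y,\underline w\in C}e^{\psi^n(\underline y)-\psi^n(\underline w)}\le K_n$ for all $n$.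 *)

(* Defs.v *)
From HB Require Import structures.
From mathcomp Require Import all_boot all_order all_algebra.
From mathcomp Require Import all_classical all_reals all_analysis.
Set Implicit Arguments. Unset Strict Implicit. Unset Printing Implicit Defensive.
Import Order.TTheory GRing.Theory Num.Theory numFieldNormedType.Exports.
Local Open Scope classical_set_scope.
Local Open Scope ring_scope.

(* The full shift on the alphabet 'I_q.+1 (i.e. q.+1 symbols). *)
Definition Sigma (q : nat) := nat -> 'I_q.+1.
HB.instance Definition _ q := Choice.copy (Sigma q) (nat -> 'I_q.+1).
HB.instance Definition _ q := isPointed.Build (Sigma q) (fun _ => ord0).

Definition shift q (x : Sigma q) : Sigma q := fun n => x n.+1.

(* prepending a symbol: the preimages of x under the shift are the [cons a x] *)
Definition scons q (a : 'I_q.+1) (x : Sigma q) : Sigma q :=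
  fun n => if n is m.+1 then x m else a.

Definition agree q (n : nat) (x y : Sigma q) : Prop := forall i, (i < n)%N -> y i = x i.

Definition cylinder q (n : nat) (x : Sigma q) : set (Sigma q) := [set y | agree n x y].

(* cylinder sets generate the (Borel) sigma-algebra of Sigma *)
Definition cylinders q : set (set (Sigma q)) :=
  [set C | exists n x, C = cylinder n x].
Definition SigmaM q := g_sigma_algebraType (@cylinders q).

(* continuity w.r.t. the product topology of the discrete alphabet *)
Definition scontinuous q {R : realType} (f : Sigma q -> R) : Prop :=
  forall x (e : R), 0 < e -> exists n, forall y, agree n x y -> `|f x - f y| < e.

Definition birkhoff q {R : realType} (psi : Sigma q -> R) (n : nat) (x : Sigma q) : R :=
  \sum_(i < n) psi (iter i (@shift q) x).

Definition transfer q {R : realType} (psi : Sigma q -> R) (phi : Sigma q -> R)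
  (x : Sigma q) : R :=
  \sum_(a : 'I_q.+1) expR (psi (scons a x)) * phi (scons a x).

Definition supnorm q {R : realType} (f : Sigma q -> R) : R :=
  sup (range (fun x => `|f x|)).

Definition opnorm_pow q {R : realType} (psi : Sigma q -> R) (n : nat) : R :=
  sup [set supnorm (iter n (transfer psi) phi) |
        phi in [set phi : Sigma q -> R | scontinuous phi /\ supnorm phi <= 1]].

(* spectral radius of L_psi on C(Sigma), via Gelfand's formula *)
Definition spectral_radius q {R : realType} (psi : Sigma q -> R) : R :=
  lim ((fun n : nat => powR (opnorm_pow psi n) n%:R^-1) @ \oo).

Definition conformal q {R : realType} (psi : Sigma q -> R)
  (mu : {measure set (SigmaM q) -> \bar R}) : Prop :=
  (0 < mu setT < +oo)%E /\
  forall phi : Sigma q -> R, scontinuous phi ->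
    (\int[mu]_x (transfer psi phi x)%:E =
     (spectral_radius psi)%:E * \int[mu]_x (phi x)%:E)%E.

Definition xi q {R : realType} (psi : Sigma q -> R) (n : nat) (x : Sigma q) : R :=
  sup [set \sum_(i < n) `|psi (iter i (@shift q) x) - psi (iter i (@shift q) y)|
       | y in cylinder n x].

Definition subexp {R : realType} (K : nat -> R) : Prop :=
  (forall n, 0 < K n) /\ (fun n : nat => ln (K n) / n%:R) @ \oo --> (0 : R).

Definition weak_gibbs q {R : realType} (psi : Sigma q -> R)
  (mu : {measure set (SigmaM q) -> \bar R}) : Prop :=
  exists (P : R) (K : nat -> R), subexp K /\
    forall n (x y : Sigma q), agree n x y ->
      ((K n)^-1%:E <= mu (cylinder n x) * (expR (- birkhoff psi n y + n%:R * P))%:E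
       <= (K n)%:E)%E.

Definition weak_bounded_variation q {R : realType} (psi : Sigma q -> R) : Prop :=
  exists K : nat -> R, subexp K /\
    forall n (x y w : Sigma q), agree n x y -> agree n x w ->
      expR (birkhoff psi n y - birkhoff psi n w) <= K n.

(* Main.v *)
Require Import Defs.
From HB Require Import structures.
From mathcomp Require Import all_boot all_order all_algebra.
From mathcomp Require Import all_classical all_reals all_analysis.
From mathcomp Require Import ring lra.
Import Order.TTheory GRing.Theory Num.Theory numFieldNormedType.Exports.
Local Open Scope classical_set_scope.
Local Open Scope ring_scope.
Set Implicit Arguments. Unset Strict Implicit.

Lemma arith (R : realType) (X m eB e2 : R) : 0 < m -> 0 < eB -> 0 < e2 ->
  eB / e2 * m <= X -> X <= eB * e2 * m ->
  (e2 * (m + m^-1))^-1 <= eB^-1 * X <= e2 * (m + m^-1).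
Proof.
move=> m0 eB0 e20 H1 H2.
have mi0 : 0 < m^-1 by rewrite invr_gt0.
apply/andP; split.
  apply: (@le_trans _ _ (m / e2)).
    rewrite invfM mulrC ler_pM2r ?invr_gt0 //.
    rewrite -[X in _ <= X]invrK lef_pV2 ?posrE ?invr_gt0 ?addr_gt0 //.
    lra.
  by rewrite ler_pdivlMl // mulrA mulrAC.
rewrite ler_pdivrMl //; apply: le_trans H2 _.
rewrite -mulrA ler_pM2l // ler_pM2l //; lra.
Qed.

Section S.
Variables (R : realType) (q : nat).
Implicit Types (x y z w : Sigma q).

Definition cylF x : set_system (Sigma q) := filter_from setT (fun n => cylinder n x).

Instance cylF_filter x : ProperFilter (cylF x).
Proof.
apply: filter_from_proper; last first.
  by move=> n _; exists x => i.
apply: filter_from_filter; first by exists 0%N.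
move=> m n _ _; exists (maxn m n) => //.
move=> y Hy; split => i Hi; apply: Hy; rewrite leq_max Hi ?orbT //.
Qed.

Lemma scontP (f : Sigma q -> R) : scontinuous f <-> forall x, f @ cylF x --> f x.
Proof.
split.
  move=> Hf x; apply/cvgrPdist_lt => e e0.
  have [n Hn] := Hf x e e0.
  by exists n => // y /Hn.
move=> Hf x e e0.
have /cvgrPdist_lt H := Hf x; have := H e e0.
by move=> [n _ Hn]; exists n => y /Hn.
Qed.

Lemma scont_mul (f g : Sigma q -> R) : scontinuous f -> scontinuous g ->
  scontinuous (fun x => f x * g x).
Proof.
move=> /scontP Hf /scontP Hg; apply/scontP => x.
exact: cvgM.
Qed.

Lemma scont_exp (f : Sigma q -> R) : scontinuous f -> scontinuous (fun x => expR (f x)).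
Proof.
move=> /scontP Hf; apply/scontP => x.
apply: continuous_cvg => //; exact: continuous_expR.
Qed.

Lemma agree_scons n a x y : agree n x y -> agree n (scons a x) (scons a y).
Proof. by move=> H [|i] Hi //=; apply: H; apply: ltnW. Qed.

Lemma scont_scons (f : Sigma q -> R) a : scontinuous f -> scontinuous (fun x => f (scons a x)).
Proof.
move=> Hf x e e0; have [n Hn] := Hf (scons a x) e e0.
by exists n => y /(agree_scons a) /Hn.
Qed.

Lemma scont_indic n w : scontinuous (\1_(cylinder n w) : Sigma q -> R).
Proof.
move=> x e e0; exists n => y Hy.
suff -> : \1_(cylinder n w) y = \1_(cylinder n w) x :> R by rewrite subrr normr0.
rewrite !indicE; congr (_%:R).
have E : cylinder n w y <-> cylinder n w x.
  split => H i Hi; [rewrite -(Hy i Hi) | rewrite (Hy i Hi)]; exact: H.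
congr (nat_of_bool _); apply/idP/idP => /set_mem H; apply/mem_set; exact/E.
Qed.

Lemma scont_cst (c : R) : scontinuous (fun _ : Sigma q => c).
Proof. by move=> x e e0; exists 0%N => y _; rewrite subrr normr0. Qed.


Definition prep n w x : Sigma q := fun i => if (i < n)%N then w i else x (i - n)%N.

Lemma agree_prep n w x : agree n w (prep n w x).
Proof. by move=> i Hi; rewrite /prep Hi. Qed.

Lemma prep0 w x : prep 0 w x = x.
Proof. by apply: funext => i; rewrite /prep subn0. Qed.

Lemma scons_prep n w x : scons (w 0%N) (prep n (Defs.shift w) x) = prep n.+1 w x.
Proof. by apply: funext => -[|i] //=; rewrite /prep /Defs.shift ltnS subSS. Qed.

Lemma shift_prep n w x : Defs.shift (prep n.+1 w x) = prep n (Defs.shift w) x.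
Proof. by apply: funext => i; rewrite /prep /Defs.shift ltnS subSS. Qed.

Lemma shift_scons a x : Defs.shift (scons a x) = x.
Proof. by []. Qed.

Lemma birkhoffS (psi : Sigma q -> R) n z :
  birkhoff psi n.+1 z = psi z + birkhoff psi n (Defs.shift z).
Proof.
rewrite /birkhoff big_ord_recl /=; congr (_ + _).
by apply: eq_bigr => i _; rewrite add0n -iterSr.
Qed.

Lemma birkhoff0 (psi : Sigma q -> R) z : birkhoff psi 0 z = 0.
Proof. by rewrite /birkhoff big_ord0. Qed.

Lemma cyl_scons n w b x :
  cylinder n.+1 w (scons b x) <-> b = w 0%N /\ cylinder n (Defs.shift w) x.
Proof.
split.
  move=> H; split; first by have := H 0%N erefl.
  by move=> i Hi; have := H i.+1 Hi.
move=> [-> H] [|i] Hi //=; exact: H.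
Qed.

Lemma transfer_cyl (psi f : Sigma q -> R) n w x :
  transfer psi (fun y => \1_(cylinder n.+1 w) y * f y) x =
  \1_(cylinder n (Defs.shift w)) x * (expR (psi (scons (w 0%N) x)) * f (scons (w 0%N) x)).
Proof.
rewrite /transfer (bigD1 (w 0%N)) //= big1 ?addr0; last first.
  move=> b Hb; rewrite indicE; case: (boolP (scons b x \in cylinder n.+1 w)).
    by move=> /set_mem /cyl_scons [E _]; rewrite E eqxx in Hb.
  by move=> _; rewrite mul0r mulr0.
rewrite !indicE; case: (boolP (x \in cylinder n (Defs.shift w))) => Hx.
  have -> : scons (w 0%N) x \in cylinder n.+1 w.
    by apply/mem_set/cyl_scons; split => //; exact/set_mem.
  by rewrite !mul1r.
have -> : scons (w 0%N) x \in cylinder n.+1 w = false.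
  apply/negbTE; apply: contra Hx => /set_mem /cyl_scons [_ H]; exact/mem_set.
by rewrite !mul0r mulr0.
Qed.


Definition Bd (psi : Sigma q -> R) n x := exists M : R, forall y, agree n x y -> `|psi y| <= M.
Definition upd x n a : Sigma q := fun i => if i == n then a else x i.

Lemma Bd_step (psi : Sigma q -> R) n x : (forall a, Bd psi n.+1 (upd x n a)) -> Bd psi n x.
Proof.
move=> H; have [Mf HM] := choice H.
exists (\sum_a `|Mf a|) => y Hy.
apply: (le_trans (HM (y n) y _)).
  move=> i; rewrite ltnS leq_eqVlt => /orP[/eqP ->|Hi]; first by rewrite /upd eqxx.
  by rewrite /upd (ltn_eqF Hi) Hy.
rewrite (bigD1 (y n)) //= (le_trans (ler_norm _)) // lerDl sumr_ge0 //.
Qed.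

Fixpoint zseq (st : nat -> Sigma q -> Sigma q) x0 k :=
  match k with 0 => x0 | k.+1 => st k (zseq st x0 k) end.

Lemma agree_trans n x y z : agree n x y -> agree n y z -> agree n x z.
Proof. by move=> H1 H2 i Hi; rewrite H2 // H1. Qed.

Lemma agree_le m n x y : (m <= n)%N -> agree n x y -> agree m x y.
Proof. by move=> Hmn H i Hi; apply: H; exact: leq_trans Hi Hmn. Qed.

Lemma psi_bounded (psi : Sigma q -> R) : scontinuous psi ->
  exists M, forall x, `|psi x| <= M.
Proof.
move=> Hpsi.
have step : forall n x, exists z, (~ Bd psi n x -> ~ Bd psi n.+1 z) /\ agree n x z.
  move=> n x; case: (pselect (Bd psi n x)) => [B|nB]; first by exists x.
  have : ~ (forall a, Bd psi n.+1 (upd x n a)) by move/Bd_step.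
  move=> /existsNP [a Ha]; exists (upd x n a); split => // i Hi.
  by rewrite /upd (ltn_eqF Hi).
have step' : forall n, exists f : Sigma q -> Sigma q, forall x,
    (~ Bd psi n x -> ~ Bd psi n.+1 (f x)) /\ agree n x (f x).
  by move=> n; have [f Hf] := choice (step n); exists f.
have [st Hst] := choice step'.
pose x0 : Sigma q := fun _ => ord0.
case: (pselect (Bd psi 0 x0)) => [[M HM]|nB].
  by exists M => x; apply: HM => i.
pose zs := zseq st x0.
have nBk : forall k, ~ Bd psi k (zs k).
  by elim => [|k IH] //=; apply: (Hst k _).1.
have agk : forall k m, (k <= m)%N -> agree k (zs k) (zs m).
  move=> k; elim => [|m IH]; first by rewrite leqn0 => /eqP ->.
  rewrite leq_eqVlt => /orP[/eqP ->|]; first by [].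
  rewrite ltnS => Hkm; apply: (agree_trans (IH Hkm)).
  exact: agree_le Hkm (Hst m (zs m)).2.
pose z : Sigma q := fun i => zs i.+1 i.
have agz : forall k, agree k (zs k) z.
  by move=> k i Hi; rewrite /z (agk i.+1 k Hi) // ltnSn.
have [N HN] := Hpsi z 1 ltr01.
exfalso; apply: (nBk N); exists (`|psi z| + 1) => y Hy.
have Hzy : agree N z y by move=> i Hi; rewrite Hy // (agz N i Hi).
have := HN y Hzy; rewrite distrC => H.
have -> : psi y = (psi y - psi z) + psi z by rewrite subrK.
apply: (le_trans (ler_normD _ _)); rewrite addrC lerD2l; exact: ltW.
Qed.


Section Xi.
Variables (psi : Sigma q -> R) (M : R).
Hypothesis HM : forall x, `|psi x| <= M.

Let dsum n x y := \sum_(i < n) `|psi (iter i (@Defs.shift q) x) - psi (iter i (@Defs.shift q) y)|.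

Lemma dsum_le n x y : dsum n x y <= n%:R * (M + M).
Proof.
apply: (@le_trans _ _ (\sum_(i < n) (M + M))); last first.
  by rewrite sumr_const card_ord mulr_natl.
apply: ler_sum => i _.
by apply: (le_trans (ler_normB _ _)); apply: lerD.
Qed.

Lemma xi_ub n x : has_ubound [set dsum n x y | y in cylinder n x].
Proof. by exists (n%:R * (M + M)) => _ [y _ <-]; exact: dsum_le. Qed.

Lemma dsum_le_xi n x y : agree n x y -> dsum n x y <= xi psi n x.
Proof. by move=> H; apply: (ub_le_sup (xi_ub n x)); exists y. Qed.

Lemma xi_ge0 n x : 0 <= xi psi n x.
Proof.
apply: le_trans (dsum_le_xi (y := x) _) => //.
exact: sumr_ge0.
Qed.

Lemma xi_le n x : xi psi n x <= n%:R * (M + M).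
Proof. by apply: ge_sup; [exists (dsum n x x), x | move=> _ [y _ <-]; exact: dsum_le]. Qed.

Lemma xi_le_supnorm n x : xi psi n x <= supnorm (xi psi n).
Proof.
rewrite /supnorm; apply: le_trans (ler_norm _) _.
apply: (ub_le_sup); last by exists x.
exists (n%:R * (M + M)) => _ [y _ <-].
by rewrite ger0_norm ?xi_ge0 // xi_le.
Qed.

Lemma birkhoff_diff n w a b : agree n w a -> agree n w b ->
  `|birkhoff psi n a - birkhoff psi n b| <= supnorm (xi psi n) + supnorm (xi psi n).
Proof.
move=> Ha Hb.
have E c : agree n w c -> `|birkhoff psi n c - birkhoff psi n w| <= supnorm (xi psi n).
  move=> Hc; apply: le_trans (xi_le_supnorm n w).
  apply: le_trans (dsum_le_xi Hc).
  rewrite /birkhoff -sumrB; apply: le_trans (ler_norm_sum _ _ _) _.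
  by apply: ler_sum => i _; rewrite distrC.
have -> : birkhoff psi n a - birkhoff psi n b =
  (birkhoff psi n a - birkhoff psi n w) - (birkhoff psi n b - birkhoff psi n w).
  by rewrite opprB addrA subrK.
by apply: (le_trans (ler_normB _ _)); apply: lerD; apply: E.
Qed.

End Xi.


Lemma inv_cvg0 : (fun n : nat => (n%:R : R)^-1) @ \oo --> (0 : R).
Proof. rewrite -cvg_shiftS; exact: cvg_harmonic. Qed.

Lemma cst_div_cvg0 (c : R) : (fun n : nat => c / n%:R) @ \oo --> (0 : R).
Proof.
rewrite -(mulr0 c); apply: cvgMr; exact: inv_cvg0.
Qed.

Lemma wbv_part (psi : Sigma q -> R) : scontinuous psi ->
  (fun n : nat => supnorm (xi psi n) / n%:R) @ \oo --> (0 : R) ->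
  weak_bounded_variation psi.
Proof.
move=> Hpsi Hxi; have [M HM] := psi_bounded Hpsi.
exists (fun n => expR (supnorm (xi psi n) + supnorm (xi psi n))); split.
  split; first by move=> n; exact: expR_gt0.
  have -> : (fun n : nat => ln (expR (supnorm (xi psi n) + supnorm (xi psi n))) / n%:R) =
     (fun n : nat => supnorm (xi psi n) / n%:R + supnorm (xi psi n) / n%:R).
    by apply: funext => n; rewrite expRK mulrDl.
  by rewrite -(addr0 0); apply: cvgD.
move=> n x y w Hy Hw; rewrite ler_expR.
apply: le_trans (ler_norm _) _; exact: (birkhoff_diff HM Hy Hw).
Qed.


Section Meas.
Local Open Scope ereal_scope.
Variable mu : {measure set (SigmaM q) -> \bar R}.

Lemma le_int_nm (f g : SigmaM q -> \bar R) : (forall x, 0 <= f x) ->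
  (forall x, f x <= g x) -> \int[mu]_x f x <= \int[mu]_x g x.
Proof.
move=> f0 fg; have g0 x : 0 <= g x := le_trans (f0 x) (fg x).
rewrite !ge0_integralTE //; apply: ereal_sup_le => _ [h /= hf <-].
by exists h => //= x; exact: le_trans (hf x) (fg x).
Qed.

Lemma int_ge_cst (c : R) (f : SigmaM q -> R) : (0 <= c)%R ->
  (forall x, c <= f x)%R -> c%:E * mu setT <= \int[mu]_x (f x)%:E.
Proof.
move=> c0 cf; rewrite -integral_cst //; apply: le_int_nm => x /=.
  by rewrite lee_fin.
by rewrite lee_fin.
Qed.

Lemma int_le_cst (c : R) (f : SigmaM q -> R) : (forall x, 0 <= f x)%R ->
  (forall x, f x <= c)%R -> \int[mu]_x (f x)%:E <= c%:E * mu setT.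
Proof.
move=> f0 cf; rewrite -integral_cst //; apply: le_int_nm => x /=.
  by rewrite lee_fin.
by rewrite lee_fin.
Qed.

Lemma cyl_meas n w : measurable (cylinder n w : set (SigmaM q)).
Proof. by apply: sub_sigma_algebra; exists n, w. Qed.

Variable psi : Sigma q -> R.
Hypothesis Hpsi : scontinuous psi.
Hypothesis Hconf : conformal psi mu.
Let lam := spectral_radius psi.

Lemma ident n w (f : Sigma q -> R) : scontinuous f ->
  (lam ^+ n)%:E * \int[mu]_x (\1_(cylinder n w) x * f x)%:E =
  \int[mu]_x (expR (birkhoff psi n (prep n w x)) * f (prep n w x))%:E.
Proof.
elim: n w f => [|n IH] w f Hf.
  rewrite expr0 mul1e; apply: eq_integral => x _.
  rewrite prep0 birkhoff0 expR0 mul1r indicE.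
  by rewrite (_ : x \in cylinder 0 w) ?mul1r //; apply/mem_set => i.
rewrite exprSr EFinM -muleA.
rewrite -(Hconf.2 _ (scont_mul (scont_indic _ _) Hf)).
under eq_integral do rewrite transfer_cyl.
rewrite IH; last first.
  apply: scont_mul; [apply: scont_exp; exact: scont_scons | exact: scont_scons].
apply: eq_integral => x _.
rewrite scons_prep birkhoffS shift_prep expRD.
by congr (_%:E); rewrite !mulrA; congr (_ * _)%R; exact: mulrC.
Qed.

Lemma cyl_ident n w : (lam ^+ n)%:E * mu (cylinder n w) =
  \int[mu]_x (expR (birkhoff psi n (prep n w x)))%:E.
Proof.
have -> : mu (cylinder n w) = mu (cylinder n w `&` setT) by rewrite setIT.
rewrite -integral_indic ?cyl_meas //.
rewrite (_ : \int[mu]_x (\1_(cylinder n w) x)%:E =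
   \int[mu]_x (\1_(cylinder n w) x * 1)%:E); last first.
  by apply: eq_integral => x _; rewrite mulr1.
rewrite (ident _ _ (scont_cst 1)).
by apply: eq_integral => x _; rewrite mulr1.
exact: cyl_meas.
Qed.

Lemma muT_fin : exists m : R, (0 < m)%R /\ mu setT = m%:E.
Proof.
have /andP[H1 H2] := Hconf.1.
move: H1 H2; case: (mu setT) => [m| |] //= H1 H2.
by exists m; split => //; rewrite -lte_fin.
Qed.

Lemma lam_gt0 : (0 < lam)%R.
Proof.
have [M HM] := psi_bounded Hpsi.
have [m [m0 Hm]] := muT_fin.
have H := Hconf.2 _ (scont_cst 1).
have Hc : \int[mu]_x (1%R)%:E = mu setT by rewrite integral_cst // mul1e.
rewrite Hc in H.
have : (expR (- M))%:E * mu setT <= \int[mu]_x (transfer psi (fun=> 1%R) x)%:E.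
  apply: int_ge_cst; first exact: ltW (expR_gt0 _).
  move=> x; rewrite /transfer (bigD1 ord0) //= mulr1.
  apply: (@le_trans _ _ (expR (psi (scons ord0 x)))%R); last first.
    by rewrite lerDl sumr_ge0 // => a _; rewrite mulr1 ltW // expR_gt0.
  rewrite ler_expR; have := HM (scons ord0 x); rewrite ler_norml => /andP[] //.
rewrite H Hm -!EFinM lee_fin ler_pM2r // => H'.
exact: lt_le_trans (expR_gt0 _) H'.
Qed.

Local Close Scope ereal_scope.
Lemma gibbs_part : (fun n : nat => (supnorm (xi psi n) / n%:R)%R) @ \oo --> (0%R : R) ->
  weak_gibbs psi mu.
Proof.
move=> Hxi.
have [M HM] := psi_bounded Hpsi.
have [m [m0 Hm]] := muT_fin.
have lam0 := lam_gt0.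
pose s n := supnorm (xi psi n).
have mm0 : (0 < m + m^-1)%R by rewrite addr_gt0 // invr_gt0.
exists (ln lam), (fun n => expR (s n + s n) * (m + m^-1))%R; split.
  split; first by move=> n; rewrite mulr_gt0 // expR_gt0.
  have -> : (fun n : nat => ln (expR (s n + s n) * (m + m^-1)) / n%:R) =
     (fun n : nat => s n / n%:R + s n / n%:R + ln (m + m^-1) / n%:R)%R.
    apply: funext => n; rewrite lnM ?posrE ?expR_gt0 // expRK !mulrDl //.
  rewrite -(addr0 0%R) -{1}(addr0 0%R); apply: cvgD; first exact: cvgD.
  exact: cst_div_cvg0.
move=> n x y Hy.
have key := cyl_ident n x.
have Hb z : (`|birkhoff psi n (prep n x z) - birkhoff psi n y| <= s n + s n)%R.
  exact: (birkhoff_diff HM (@agree_prep n x z) Hy).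
set B := birkhoff psi n y.
have lo : ((expR (B - (s n + s n)))%:E * mu setT <=
          \int[mu]_z (expR (birkhoff psi n (prep n x z)))%:E)%E.
  apply: int_ge_cst; first exact: ltW (expR_gt0 _).
  move=> z; rewrite ler_expR; have := Hb z; rewrite distrC ler_norml => /andP[_ H].
  rewrite /B; lra.
have up : (\int[mu]_z (expR (birkhoff psi n (prep n x z)))%:E <=
          (expR (B + (s n + s n)))%:E * mu setT)%E.
  apply: int_le_cst; first by move=> z; exact: ltW (expR_gt0 _).
  move=> z; rewrite ler_expR; have := Hb z; rewrite ler_norml => /andP[_ H].
  rewrite /B; lra.
have Cle : (mu (cylinder n x) <= mu setT)%E.
  by apply: le_measure; rewrite ?inE //; exact: cyl_meas.
have Cge : (0 <= mu (cylinder n x))%E by exact: measure_ge0.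
rewrite -key Hm in lo up.
move: Cle Cge lo up; rewrite Hm; case: (mu (cylinder n x)) => [c| |] //= Cle Cge lo up.
rewrite -!EFinM !lee_fin in lo up *.
rewrite (expRD (- B)) expRM_natl lnK ?posrE // expRN.
rewrite expRD expRN in lo; rewrite expRD in up.
have := @arith R (lam ^+ n * c) m (expR B) (expR (s n + s n)) m0 (expR_gt0 _) (expR_gt0 _) lo up.
move=> HH; rewrite mulrCA (mulrC c); exact: HH.
Qed.

End Meas.

End S.

Unset Implicit Arguments.

Theorem proposition5 (R : realType) (q : nat) (psi : Sigma q -> R) :
  scontinuous psi ->
  (fun n : nat => supnorm (xi psi n) / n%:R) @ \oo --> (0 : R) ->
  (forall mu : {measure set (SigmaM q) -> \bar R}, conformal psi mu -> weak_gibbs psi mu)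
  /\ weak_bounded_variation psi.
Proof.
move=> Hpsi Hxi; split; last exact: wbv_part.
move=> mu Hconf; exact: gibbs_part Hpsi Hconf Hxi.
Qed.
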